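(* In the deductive system $NOM$, for all finite sequences of formulas $\Gamma$ and all formulas $\phi,\psi$, the following two rules of inference are derivable: from $\Gamma \vdash \phi \rightarrow \psi$ infer $\Gamma \vdash \neg(\phi \wedge \neg(\phi \wedge \psi))$; and from $\Gamma \vdash \neg(\phi \wedge \neg(\phi \wedge \psi))$ infer $\Gamma \vdash \phi \rightarrow \psi$.
   Context: The propositional deductive system $NOM$: formulas are built from propositional letters using the binary connectives $\wedge$, $\rightarrow$ and the unary connective $\neg$. A sequent is an expression $\phi_1,\ldots,\phi_n \vdash \psi$ with $n\ge 0$, whose antecedent is a finite sequence (order matters, repetitions allowed) of formulas. Below $\Gamma$ denotes a finite, possibly empty, sequence of formulas, $\phi,\psi,\chi$ formulas, and commas denote concatenation. A sequent is derivable in $NOM$ if it can be obtained with the following rules (premises $\Rightarrow$ conclusion): (assumption) $\Gamma,\phi\vdash\phi$, no premises; (cut) $\Gamma\vdash\phi$ and $\Gamma,\phi\vdash\psi$ $\Rightarrow$ $\Gamma\vdash\psi$; (paste) $\Gamma\vdash\phi$ and $\Gamma\vdash\psi$ $\Rightarrow$ $\Gamma,\phi\vdash\psi$; (compatible exchange) $\Gamma,\phi,\psi\vdash\phi$ and $\Gamma,\phi,\psi\vdash\chi$ and $\Gamma,\psi,\phi\vdash\psi$ $\Rightarrow$ $\Gamma,\psi,\phi\vdash\chi$; ($\wedge$-introduction) $\Gamma\vdash\phi$ and $\Gamma\vdash\psi$ $\Rightarrow$ $\Gamma\vdash\phi\wedge\psi$; ($\wedge$-elimination) $\Gamma\vdash\phi\wedge\psi$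 $\Rightarrow$ $\Gamma\vdash\phi$, and $\Gamma\vdash\phi\wedge\psi$ $\Rightarrow$ $\Gamma\vdash\psi$; ($\rightarrow$-introduction) $\Gamma,\phi\vdash\psi$ $\Rightarrow$ $\Gamma\vdash\phi\rightarrow\psi$; ($\rightarrow$-elimination) $\Gamma\vdash\phi\rightarrow\psi$ $\Rightarrow$ $\Gamma,\phi\vdash\psi$; (excluded middle) $\Gamma,\phi\vdash\psi$ and $\Gamma,\neg\phi\vdash\psi$ $\Rightarrow$ $\Gamma\vdash\psi$; (deductive explosion) $\Gamma\vdash\neg\phi$ $\Rightarrow$ $\Gamma,\phi\vdash\psi$. A rule schema is derivable if in every instance its conclusion can be derived from its premises using these rules. *)

(* Defs.v *)
From Stdlib Require Import List.
Import ListNotations.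

Inductive formula : Type :=
| Var : nat -> formula
| And : formula -> formula -> formula
| Imp : formula -> formula -> formula
| Neg : formula -> formula.

Record sequent : Type := Seq { ante : list formula; succ : formula }.

(* Derivability in NOM from a set H of additional premise sequents
   (H = fun _ => False gives plain derivability).  Commas are list
   concatenation: "Gamma, phi" is Gamma ++ [phi]. *)
Inductive NOM_from (H : sequent -> Prop) : sequent -> Prop :=
| nom_hyp : forall s, H s -> NOM_from H s
| nom_assumption : forall G p, NOM_from H (Seq (G ++ [p]) p)
| nom_cut : forall G p q,
    NOM_from H (Seq G p) -> NOM_from H (Seq (G ++ [p]) q) ->
    NOM_from H (Seq G q)
| nom_paste : forall G p q,
    NOM_from H (Seq G p) -> NOM_from H (Seq G q) ->
    NOM_from H (Seq (G ++ [p]) q)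
| nom_cexch : forall G p q r,
    NOM_from H (Seq (G ++ [p; q]) p) ->
    NOM_from H (Seq (G ++ [p; q]) r) ->
    NOM_from H (Seq (G ++ [q; p]) q) ->
    NOM_from H (Seq (G ++ [q; p]) r)
| nom_andI : forall G p q,
    NOM_from H (Seq G p) -> NOM_from H (Seq G q) ->
    NOM_from H (Seq G (And p q))
| nom_andE1 : forall G p q,
    NOM_from H (Seq G (And p q)) -> NOM_from H (Seq G p)
| nom_andE2 : forall G p q,
    NOM_from H (Seq G (And p q)) -> NOM_from H (Seq G q)
| nom_impI : forall G p q,
    NOM_from H (Seq (G ++ [p]) q) -> NOM_from H (Seq G (Imp p q))
| nom_impE : forall G p q,
    NOM_from H (Seq G (Imp p q)) -> NOM_from H (Seq (G ++ [p]) q)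
| nom_em : forall G p q,
    NOM_from H (Seq (G ++ [p]) q) -> NOM_from H (Seq (G ++ [Neg p]) q) ->
    NOM_from H (Seq G q)
| nom_explosion : forall G p q,
    NOM_from H (Seq G (Neg p)) -> NOM_from H (Seq (G ++ [p]) q).

Definition derivable_rule1 (premise conclusion : sequent) : Prop :=
  NOM_from (fun s => s = premise) conclusion.

(* Main.v *)
Require Import Defs.
From Stdlib Require Import List.
Import ListNotations.

Section NOMLemmas.
Variable P : sequent -> Prop.
Local Notation N := (NOM_from P).

Lemma cexch' G p q r :
  N (Seq ((G ++ [p]) ++ [q]) p) -> N (Seq ((G ++ [p]) ++ [q]) r) ->
  N (Seq ((G ++ [q]) ++ [p]) q) -> N (Seq ((G ++ [q]) ++ [p]) r).
Proof.
  rewrite <- !app_assoc; simpl. apply nom_cexch.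
Qed.

Lemma lemT G X Y r :
  N (Seq (G ++ [X]) Y) -> N (Seq ((G ++ [Y]) ++ [X]) Y) ->
  N (Seq ((G ++ [Y]) ++ [X]) r) -> N (Seq (G ++ [X]) r).
Proof.
  intros h1 h2 h3.
  apply nom_cut with Y; [exact h1|].
  apply cexch'; [exact h2|exact h3|].
  apply nom_paste; [exact h1| apply nom_assumption].
Qed.

Lemma imp_dni G phi : N (Seq G (Imp phi (Neg (Neg phi)))).
Proof.
  apply nom_em with (Neg (Neg phi)).
  - apply nom_impI. apply nom_paste; [|apply nom_assumption].
    apply nom_em with phi; [apply nom_assumption|].
    apply nom_explosion. apply nom_assumption.
  - apply nom_cut with (Neg phi).
    + apply nom_em with (Neg phi); [apply nom_assumption|].
      apply nom_explosion. apply nom_assumption.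
    + apply nom_impI. apply nom_explosion. apply nom_assumption.
Qed.

Lemma dni G phi : N (Seq G phi) -> N (Seq G (Neg (Neg phi))).
Proof.
  intro h. apply nom_cut with phi; [exact h|].
  apply nom_impE. apply imp_dni.
Qed.

Lemma lemC G phi r : N (Seq G phi) -> N (Seq (G ++ [Neg phi]) r).
Proof.
  intro h. apply nom_explosion. apply dni. exact h.
Qed.

Lemma dir1 G p q : N (Seq G (Imp p q)) ->
  N (Seq G (Neg (And p (Neg (And p q))))).
Proof.
  intro hyp.
  set (A := And p (Neg (And p q))).
  set (B := And p q).
  apply nom_em with A; [|apply nom_assumption].
  apply lemT with p.
  - apply nom_andE1 with (Neg B). apply nom_assumption.
  - apply nom_andE1 with (Neg B). apply nom_assumption.
  - apply lemT with (Neg B).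
    + apply nom_andE2 with p. apply nom_assumption.
    + apply nom_andE2 with p. apply nom_assumption.
    + apply nom_explosion. apply lemC.
      apply nom_andI; [apply nom_assumption| apply nom_impE; exact hyp].
Qed.

Lemma dir2 G p q : N (Seq G (Neg (And p (Neg (And p q))))) ->
  N (Seq G (Imp p q)).
Proof.
  intro hyp.
  set (A := And p (Neg (And p q))).
  set (B := And p q).
  assert (iA : forall r, N (Seq (G ++ [A]) r)).
  { intro r. apply nom_explosion. exact hyp. }
  assert (iAB : forall r, N (Seq ((G ++ [A]) ++ [Neg B]) r)).
  { intro r. apply nom_paste; apply iA. }
  assert (iBA : forall r, N (Seq ((G ++ [Neg B]) ++ [A]) r)).
  { intro r. apply cexch'; [apply iAB|apply iAB|].
    apply nom_andE2 with p. apply nom_assumption. }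
  assert (iBpA : forall r, N (Seq (((G ++ [Neg B]) ++ [p]) ++ [A]) r)).
  { intro r. apply cexch'.
    - apply nom_paste; [|apply nom_assumption].
      apply nom_andE1 with (Neg B). apply nom_assumption.
    - apply nom_paste; apply iBA.
    - apply nom_andE1 with (Neg B). apply nom_assumption. }
  assert (iBB : forall r, N (Seq ((G ++ [Neg B]) ++ [B]) r)).
  { intro r. apply nom_explosion. apply nom_assumption. }
  apply nom_em with B.
  - apply nom_impI. apply nom_paste.
    + apply nom_andE1 with q. apply nom_assumption.
    + apply nom_andE2 with p. apply nom_assumption.
  - apply nom_em with p.
    + apply nom_cut with A; [|apply iBpA].
      apply nom_andI; [apply nom_assumption|].
      apply nom_em with B; [|apply nom_assumption].
      apply cexch'.
      * apply nom_paste; [|apply nom_assumption]. apply iBB.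
      * apply nom_paste; apply iBB.
      * apply nom_andE1 with q. apply nom_assumption.
    + apply nom_impI. apply nom_explosion. apply nom_assumption.
Qed.

End NOMLemmas.

Theorem theorem2p10 :
  forall (G : list formula) (p q : formula),
    derivable_rule1 (Seq G (Imp p q)) (Seq G (Neg (And p (Neg (And p q)))))
    /\ derivable_rule1 (Seq G (Neg (And p (Neg (And p q))))) (Seq G (Imp p q)).
Proof.
  intros G p q. unfold derivable_rule1. split.
  - apply dir1. apply nom_hyp. reflexivity.
  - apply dir2. apply nom_hyp. reflexivity.
Qed.
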